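(* In the standing setup, the vector $(\partial\tilde f_0/\partial x_1,\dots,\partial\tilde f_0/\partial x_n)$ does not vanish identically on any torus orbit of $X$.
   Context: Standing setup. $\mathbf F=(f_0,\dots,f_m)$ is a generic sparse system $f_i=\sum_{\alpha\in\mathcal A_i}c_{\alpha,i}X^\alpha\in\mathbb C[X_1,\dots,X_n]$ (generic: coefficients in a nonempty Zariski open subset of $\prod_i\mathbb C^{\mathcal A_i}$) with admissible support $\mathcal A$, i.e. (1) for each $i$, $\mathbb R^n_{\ge0}$ is a cone of the inner normal fan of $\operatorname{conv}(\mathcal A_i)$; (2) each $\operatorname{conv}(\mathcal A_i)$ meets every coordinate hyperplane; (3) $\mathcal A_0$ contains a ''vector of unity'' (a standard basis vector $e_j$). $X$ is a proper normal toric variety with fan $\Sigma$ appropriate for $\mathcal A$: $\Sigma$ refines each normal fan of $\operatorname{conv}(\mathcal A_i)$, $\mathbb R^n_{\ge0}\in\Sigma$, and for generic $f_1,\dots,f_m$ the closure of $\{f_1=\dots=f_m=0\}$ in $X$ avoids $\operatorname{Sing}X$. Cox ring $S=\mathbb C[x_\rho:\rho\in\Sigma(1)]$, $x_j:=x_{e_j}$. $a_{\rho,0}=-\min\{\langle u,\rho\rangle:u\in\mathrm{Newt}(f_0)\}$ and $\tilde f_0=\sum_\alpha c_{\alpha,0}\prod_\rho x_\rho^{\langle\alpha,\rho\rangle+a_{\rho,0}}\in S$. The torus orbit $O(\sigma)$ of a cone $\sigma\in\Sigma$ corresponds, in Cox coordinates, to points with $x_\rho=0$ exactly for $\rho\subseteq\sigma$.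 *)

(* Defs.v *)
From HB Require Import structures.
From mathcomp Require Import all_boot all_order all_algebra.
From mathcomp Require Import finmap.
From mathcomp Require Import Rstruct.
From mathcomp Require Import complex.
From mathcomp Require Import mpoly.

Set Implicit Arguments.
Unset Strict Implicit.
Unset Printing Implicit Defensive.

Import Order.TTheory GRing.Theory Num.Theory.
Local Open Scope ring_scope.
Local Open Scope fset_scope.

Notation RR := Rdefinitions.R.
Notation CC := (complex Rdefinitions.R).

Notation expo n := {ffun 'I_n -> nat}.
Notation zvec n := {ffun 'I_n -> int}.
Notation rvec n := ('I_n -> RR).

Definition dotNR n (a : expo n) (v : rvec n) : RR := \sum_i (a i)%:R * v i.
Definition dotRR n (u v : rvec n) : RR := \sum_i u i * v i.
Definition dotNZ n (a : expo n) (r : zvec n) : int := \sum_i (a i)%:Z * r i.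
Definition zreal n (r : zvec n) : rvec n := fun i => (r i)%:~R.
Definition unitN n (j : 'I_n) : expo n := [ffun i => nat_of_bool (i == j)].
Definition unitZ n (j : 'I_n) : zvec n := [ffun i => (nat_of_bool (i == j))%:Z].

(* Polyhedral cones and fans.  A fan Sigma in R^n is given by its rays  *)
(* ray : 'I_k -> Z^n (the primitive generators of the elements of      *)
(* Sigma(1)) and a list of cones, each cone being given by the set of   *)
(* (indices of) rays generating it.                                     *)

Definition cone n k (ray : 'I_k -> zvec n) (S : {set 'I_k}) (v : rvec n) : Prop :=
  exists lam : 'I_k -> RR, (forall r, 0 <= lam r) /\
    forall i, v i = \sum_(r in S) lam r * zreal (ray r) i.

Definition is_face n (C F : rvec n -> Prop) : Prop :=
  exists w : rvec n, (forall v, C v -> 0 <= dotRR w v) /\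
    (forall v, F v <-> (C v /\ dotRR w v = 0)).

Definition primitive n (r : zvec n) : Prop :=
  forall d : nat, (forall i, (d%:Z %| r i)%Z) -> d = 1%N.

Definition complete_fan n k (ray : 'I_k -> zvec n) (Sigma : seq {set 'I_k}) : Prop :=
  (forall r, primitive (ray r)) /\
  injective ray /\
  (* Sigma(1) consists exactly of the rays cone(ray r) *)
  (forall r, [set r] \in Sigma) /\
  (forall s, s \in Sigma -> forall v, cone ray s v -> cone ray s (fun i => - v i) ->
       forall i, v i = 0) /\
  (forall s, s \in Sigma -> forall F, is_face (cone ray s) F ->
       exists2 t, t \in Sigma & forall v, F v <-> cone ray t v) /\
  (forall s t, s \in Sigma -> t \in Sigma ->
       is_face (cone ray s) (fun v => cone ray s v /\ cone ray t v) /\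
       is_face (cone ray t) (fun v => cone ray s v /\ cone ray t v)) /\
  (forall v : rvec n, exists2 s, s \in Sigma & cone ray s v).

(* Inner normal fan of conv(A), A a finite nonempty subset of N^n.     *)
(* The face of conv(A) on which w attains its minimum is               *)
(* conv(faceA A w); the cone of the inner normal fan associated with    *)
(* that face is { v | faceA A w is contained in faceA A v }.            *)
Definition faceA n (A : {fset expo n}) (w : rvec n) (a : expo n) : Prop :=
  a \in A /\ forall b, b \in A -> dotNR a w <= dotNR b w.

Definition normal_cone n (A : {fset expo n}) (w : rvec n) (v : rvec n) : Prop :=
  forall a, faceA A w a -> faceA A v a.

Definition is_normal_fan_cone n (A : {fset expo n}) (C : rvec n -> Prop) : Prop :=
  exists w, forall v, C v <-> normal_cone A w v.

Definition orthant n (v : rvec n) : Prop := forall i, 0 <= v i.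

Definition refines_normal_fan n k (ray : 'I_k -> zvec n) (Sigma : seq {set 'I_k})
    (A : {fset expo n}) : Prop :=
  forall s, s \in Sigma -> exists w, forall v, cone ray s v -> normal_cone A w v.

Definition meets_coord_hyperplanes n (A : {fset expo n}) : Prop :=
  forall j : 'I_n, exists lam : expo n -> RR,
    [/\ forall a, 0 <= lam a, \sum_(a <- A) lam a = 1
      & \sum_(a <- A) lam a * (a j)%:R = 0].

Definition admissible n m (A : 'I_m.+1 -> {fset expo n}) : Prop :=
  [/\ forall i, is_normal_fan_cone (A i) (@orthant n),
      forall i, meets_coord_hyperplanes (A i)
    & exists j : 'I_n, unitN j \in A ord0].

Definition appropriate_fan n m k (A : 'I_m.+1 -> {fset expo n})
    (ray : 'I_k -> zvec n) (Sigma : seq {set 'I_k}) : Prop :=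
  [/\ complete_fan ray Sigma,
      forall i, refines_normal_fan ray Sigma (A i)
    & exists2 t, t \in Sigma & forall v, cone ray t v <-> orthant v].

(* Genericity: a property holds for coefficients in a nonempty Zariski  *)
(* open subset of prod_i C^{A_i}.                                       *)
Definition coefT n m (A : 'I_m.+1 -> {fset expo n}) : finType := {i : 'I_m.+1 & A i}.

Definition zariski_open (T : finType) (U : (T -> CC) -> Prop) : Prop :=
  exists s : seq {mpoly CC[#|T|]},
    forall x, U x <-> exists2 g, g \in s & g.@[fun r => x (enum_val r)] != 0.

Definition coords n m (A : 'I_m.+1 -> {fset expo n})
    (c : 'I_m.+1 -> expo n -> CC) : coefT A -> CC :=
  fun t => c (tag t) (val (tagged t)).

Definition generic_coeffs n m (A : 'I_m.+1 -> {fset expo n})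
    (P : ('I_m.+1 -> expo n -> CC) -> Prop) : Prop :=
  exists U : (coefT A -> CC) -> Prop,
    [/\ zariski_open U, exists x, U x & forall c, U (coords c) -> P c].

Definition minZ (s : seq int) : int := foldr Order.min (head 0 s) s.

(* a_{rho,0} = - min { <u, rho> : u in Newt(f_0) }, the minimum over the
   polytope being attained on the support of f_0 *)
Definition a_rho n k (ray : 'I_k -> zvec n) (A0 : {fset expo n}) (c0 : expo n -> CC)
    (r : 'I_k) : int :=
  - minZ [seq dotNZ a (ray r) | a <- A0 & c0 a != 0].

Definition cox_exponent n k (ray : 'I_k -> zvec n) (A0 : {fset expo n})
    (c0 : expo n -> CC) (a : expo n) : 'X_{1..k} :=
  [multinom absz (dotNZ a (ray r) + a_rho ray A0 c0 r)%R | r < k].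

Definition ftilde n k (ray : 'I_k -> zvec n) (A0 : {fset expo n}) (c0 : expo n -> CC)
    : {mpoly CC[k]} :=
  \sum_(a <- A0) c0 a *: 'X_[cox_exponent ray A0 c0 a].

(* the point y (in Cox coordinates) lies in the torus orbit O(sigma):
   y_rho = 0 exactly for the rays rho contained in sigma *)
Definition in_torus_orbit n k (ray : 'I_k -> zvec n) (s : {set 'I_k}) (y : 'I_k -> CC) : Prop :=
  forall r, y r = 0 <-> cone ray s (zreal (ray r)).

(* Main.v *)
Require Import Defs.
From HB Require Import structures.
From mathcomp Require Import all_boot all_order all_algebra.
From mathcomp Require Import finmap.
From mathcomp Require Import Rstruct.
From mathcomp Require Import complex.
From mathcomp Require Import mpoly.
From mathcomp Require Import zify ring lra.
From Stdlib Require Import ClassicalEpsilon.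
Set Implicit Arguments.
Unset Strict Implicit.
Unset Printing Implicit Defensive.
Import Order.TTheory GRing.Theory Num.Theory.
Local Open Scope ring_scope.
Lemma dotNR_zreal n (a : expo n) (r : zvec n) : dotNR a (zreal r) = (dotNZ a r)%:~R.
Proof.
rewrite /dotNR /dotNZ /zreal rmorph_sum; apply: eq_bigr => i _.
by rewrite rmorphM /= pmulrn.
Qed.
Lemma dotNZ_unitZ n (a : expo n) j : dotNZ a (unitZ j) = (a j)%:Z.
Proof.
rewrite /dotNZ (bigD1 j) //= big1 ?addr0; first by rewrite ffunE eqxx mulr1.
by move=> i /negbTE ij; rewrite ffunE ij mulr0.
Qed.
Lemma dotNZ_unitN n (r : zvec n) j : dotNZ (unitN j) r = r j.
Proof.
rewrite /dotNZ (bigD1 j) //= big1 ?addr0; first by rewrite ffunE eqxx mul1r.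
by move=> i /negbTE ij; rewrite ffunE ij mul0r.
Qed.
Lemma dotNZ0 n (r : zvec n) : dotNZ [ffun _ => 0%N] r = 0.
Proof. by rewrite /dotNZ big1 // => i _; rewrite ffunE mul0r. Qed.
Lemma foldr_min_le (s : seq int) x0 y : y \in s -> foldr Order.min x0 s <= y.
Proof.
elim: s => //= a s IH; rewrite inE => /orP[/eqP->|/IH h]; first by rewrite ge_min lexx.
by rewrite ge_min h orbT.
Qed.
Lemma foldr_min_le0 (s : seq int) x0 : foldr Order.min x0 s <= x0.
Proof. elim: s => //= a s IH; by rewrite ge_min IH orbT. Qed.
Lemma foldr_min_mem (s : seq int) x0 : foldr Order.min x0 s \in x0 :: s.
Proof.
elim: s => [|a s IH] /=; first by rewrite inE.
rewrite /Order.min; case: ifP => _; first by rewrite !inE eqxx orbT.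
move: IH; rewrite !inE => /orP[->|->] //; by rewrite !orbT.
Qed.
Lemma minZ_le (s : seq int) y : y \in s -> minZ s <= y.
Proof. exact: foldr_min_le. Qed.
Lemma minZ_ge (s : seq int) y : s != [::] -> (forall z, z \in s -> y <= z) -> y <= minZ s.
Proof.
case: s => // a s _ H; rewrite /minZ /=.
have := foldr_min_mem (a :: s) a; rewrite /= inE => /orP[/eqP->|/H //].
by apply: H; rewrite inE eqxx.
Qed.

Lemma argmin_seq (T : eqType) (s : seq T) (f : T -> RR) : s != [::] ->
  exists2 a, a \in s & forall b, b \in s -> f a <= f b.
Proof.
elim: s => // x s IH _; case: (altP (s =P [::])) => [->|/IH [a ain amin]].
  by exists x; rewrite ?inE // => b; rewrite inE => /eqP->.
case: (lerP (f x) (f a)) => h.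
  exists x; first by rewrite inE eqxx.
  by move=> b; rewrite inE => /orP[/eqP->//|/amin]; apply: le_trans.
exists a; first by rewrite inE ain orbT.
by move=> b; rewrite inE => /orP[/eqP->|/amin//]; apply: ltW.
Qed.

Lemma coord_zero n (A : {fset expo n}) : meets_coord_hyperplanes A ->
  forall j, exists2 b, b \in A & b j = 0%N.
Proof.
move=> H j; have [lam [l0 l1 l2]] := H j.
case: (boolP (has (fun b : expo n => b j == 0%N) A)) => [/hasP [b bin /eqP bj]|/hasPn hno]; first by exists b.
have : \sum_(a <- A) lam a <= \sum_(a <- A) lam a * (a j)%:R.
  rewrite big_seq [X in _ <= X]big_seq; apply: ler_sum => a ain.
  by rewrite -[X in X <= _]mulr1 ler_wpM2l // ler1n lt0n hno.
by rewrite l1 l2 ler10.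
Qed.
Definition ev n (j : 'I_n) : rvec n := fun i => if i == j then 1 else 0.
Lemma dotNR_ev n (a : expo n) j : dotNR a (ev j) = (a j)%:R.
Proof.
rewrite /dotNR (bigD1 j) //= big1 ?addr0; first by rewrite /ev eqxx mulr1.
by move=> i /negbTE ij; rewrite /ev ij mulr0.
Qed.
Lemma dotRR_ev n (w : rvec n) j : dotRR w (ev j) = w j.
Proof.
rewrite /dotRR (bigD1 j) //= big1 ?addr0; first by rewrite /ev eqxx mulr1.
by move=> i /negbTE ij; rewrite /ev ij mulr0.
Qed.
Lemma orthant_ev n (j : 'I_n) : orthant (ev j).
Proof. by move=> i; rewrite /ev; case: ifP. Qed.

Lemma cone_self n k (ray : 'I_k -> zvec n) (t : {set 'I_k}) r :
  r \in t -> cone ray t (zreal (ray r)).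
Proof.
move=> rt; exists (fun r' => if r' == r then 1 else 0); split.
  by move=> r'; case: ifP.
move=> i; rewrite (bigD1 r) //= eqxx mul1r big1 ?addr0 //.
by move=> r' /andP[_ /negbTE ->]; rewrite mul0r.
Qed.

Lemma prim_unit n (r : zvec n) j : primitive r -> 0 < r j ->
  (forall i, i != j -> r i = 0) -> r = unitZ j.
Proof.
move=> pr rj0 roff.
have d1 : absz (r j) = 1%N.
  apply: pr => i; case: (eqVneq i j) => [->|/roff ->]; last exact: dvdz0.
  by rewrite gez0_abs ?ltW.
apply/ffunP => i; rewrite ffunE; case: (eqVneq i j) => [->|/roff ->//].
by rewrite -(gez0_abs (ltW rj0)) d1.
Qed.
Lemma ray_unit n k (ray : 'I_k -> zvec n) (Sigma : seq {set 'I_k}) :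
  complete_fan ray Sigma ->
  (exists2 t, t \in Sigma & forall v, cone ray t v <-> orthant v) ->
  forall j : 'I_n, exists r, ray r = unitZ j.
Proof.
move=> [prim [inj [single [sc [faces [inter compl]]]]]] [t tS tE] j.
pose F := fun v : rvec n => orthant v /\ forall i, i != j -> v i = 0.
have Fface : is_face (cone ray t) F.
  exists (fun i => if i == j then 0 else 1); split.
    move=> v /tE ov; rewrite /dotRR sumr_ge0 // => i _.
    by case: ifP => _; rewrite ?mul0r ?mul1r ?ov.
  move=> v; split.
    move=> [ov voff]; split; first exact/tE.
    rewrite /dotRR big1 // => i _; case: (eqVneq i j) => [_|/voff ->].
      by rewrite mul0r.
    by rewrite mulr0.
  move=> [/tE ov h]; split => // i ij.
  have := psumr_eq0P (P := predT) _ h (i := i) isT.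
  rewrite (negbTE ij) mul1r; apply.
  by move=> i' _; case: ifP => _; rewrite ?mul0r ?mul1r ?ov.
have [t' t'S t'E] := faces t tS F Fface.
have [lam [lam0 lamE]] : cone ray t' (ev j).
  apply/t'E; split; first exact: orthant_ev.
  by move=> i /negbTE ij; rewrite /ev ij.
have Fr : forall r, r \in t' -> F (zreal (ray r)).
  by move=> r rt; apply/t'E; exact: cone_self.
case: (boolP [exists r in t', ray r j != 0]) => [/existsP [r /andP [rt rj]]|].
  exists r; apply: prim_unit => //.
    have [ro _] := Fr r rt; have := ro j; rewrite /zreal ler0z le_eqVlt.
    by rewrite eq_sym (negbTE rj).
  move=> i ij; have [_ h] := Fr r rt; have := h i ij.
  by rewrite /zreal => /eqP; rewrite intr_eq0 => /eqP.
rewrite negb_exists => /forallP hno.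
have := lamE j; rewrite /ev eqxx big1; first by move/eqP; rewrite oner_eq0.
move=> r rt.
have := hno r; rewrite rt /= negbK => /eqP h.
by rewrite /zreal h mulr0.
Qed.
Lemma orthant_ray n k (ray : 'I_k -> zvec n) (Sigma : seq {set 'I_k}) t r j :
  complete_fan ray Sigma -> t \in Sigma -> (forall v, cone ray t v <-> orthant v) ->
  orthant (zreal (ray r)) -> 0 < ray r j -> ray r = unitZ j.
Proof.
move=> [prim [inj [single [sc [faces [inter compl]]]]]] tS tE ro rj.
have [_ [w [w0 wE]]] := inter _ _ (single r) tS.
have wr : dotRR w (zreal (ray r)) = 0.
  by have [] := (wE (zreal (ray r))).1 (conj (@cone_self _ _ ray _ _ (set11 r)) ((tE _).2 ro)).
have wi : forall i, 0 <= w i by move=> i; rewrite -dotRR_ev w0 //; apply/tE/orthant_ev.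
have wj : w j = 0.
  have := psumr_eq0P (P := predT) (F := fun i => w i * zreal (ray r) i) _ wr (i := j) isT.
  move=> /(_ (fun i _ => mulr_ge0 (wi i) (ro i))) /eqP; rewrite mulf_eq0 => /orP[/eqP//|].
  by rewrite /zreal intr_eq0 => /eqP h; move: rj; rewrite h ltxx.
have wej : dotRR w (ev j) = 0 by rewrite dotRR_ev.
have [[lam [_ lamE]] _] := (wE (ev j)).2 (conj ((tE _).2 (orthant_ev j)) wej).
apply: prim_unit => // i ij.
have := lamE i; rewrite /ev (negbTE ij) big_set1 => /esym /eqP; rewrite mulf_eq0.
case/orP => [/eqP l0|]; last by rewrite /zreal intr_eq0 => /eqP.
by have := lamE j; rewrite /ev eqxx big_set1 l0 mul0r => /eqP; rewrite oner_eq0.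
Qed.

Lemma zero_face n (A : {fset expo n}) v :
  is_normal_fan_cone A (@orthant n) -> meets_coord_hyperplanes A ->
  faceA A v [ffun _ => 0%N] -> orthant v.
Proof.
move=> [w0 w0E] mc f0.
have face_w0 : forall a', faceA A w0 a' -> a' = [ffun _ => 0%N].
  move=> a' fa'; apply/ffunP => i; rewrite ffunE.
  have [b bA bi] := coord_zero mc i.
  have [_ h] := (w0E (ev i)).1 (orthant_ev i) a' fa'.
  have := h b bA; rewrite !dotNR_ev bi ler_nat leqn0 => /eqP //.
apply/w0E => a' /face_w0 -> //.
Qed.
Definition Ls n k (ray : 'I_k -> zvec n) (A0 : {fset expo n}) (c0 : expo n -> CC) r :=
  [seq dotNZ a (ray r) | a <- A0 & c0 a != 0].

Lemma memLs n k (ray : 'I_k -> zvec n) (A0 : {fset expo n}) (c0 : expo n -> CC) r b :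
  (forall a, a \in A0 -> c0 a != 0) -> b \in A0 -> dotNZ b (ray r) \in Ls ray A0 c0 r.
Proof. by move=> c0nz bA; apply: map_f; rewrite mem_filter c0nz. Qed.

Arguments memLs {n k} ray {A0 c0} r {b}.
Lemma Eint n k (ray : 'I_k -> zvec n) (A0 : {fset expo n}) (c0 : expo n -> CC) r b :
  (forall a, a \in A0 -> c0 a != 0) -> b \in A0 ->
  ((cox_exponent ray A0 c0 b r)%:Z = dotNZ b (ray r) - minZ (Ls ray A0 c0 r)).
Proof.
move=> c0nz bA; rewrite /cox_exponent mnmE /a_rho -/(Ls ray A0 c0 r) gez0_abs //.
by rewrite subr_ge0; apply: minZ_le; apply: memLs.
Qed.

Arguments Eint {n k} ray {A0 c0} r {b}.
Lemma minZ_eq n k (ray : 'I_k -> zvec n) (A0 : {fset expo n}) (c0 : expo n -> CC) r b :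
  (forall a, a \in A0 -> c0 a != 0) -> b \in A0 ->
  (forall a, a \in A0 -> dotNZ b (ray r) <= dotNZ a (ray r)) ->
  minZ (Ls ray A0 c0 r) = dotNZ b (ray r).
Proof.
move=> c0nz bA bmin; apply/eqP; rewrite eq_le minZ_le ?memLs //=.
apply: minZ_ge.
  by apply/eqP => h; have := memLs ray r c0nz bA; rewrite h.
move=> z /mapP [a]; rewrite mem_filter => /andP [_ aA] ->; exact: bmin.
Qed.
Lemma face_int n (A0 : {fset expo n}) (rho : zvec n) a :
  faceA A0 (zreal rho) a -> forall b, b \in A0 -> dotNZ a rho <= dotNZ b rho.
Proof. by move=> [_ h] b /h; rewrite !dotNR_zreal ler_int. Qed.

Lemma core n m k (A : 'I_m.+1 -> {fset expo n}) (ray : 'I_k -> zvec n)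
  (Sigma : seq {set 'I_k}) (c0 : expo n -> CC) :
  admissible A -> appropriate_fan A ray Sigma ->
  (forall a, a \in A ord0 -> c0 a != 0) ->
  forall s, s \in Sigma -> exists j r, ray r = unitZ j /\
    exists2 b, b \in A ord0 & (0 < cox_exponent ray (A ord0) c0 b r)%N /\
      forall r', cone ray s (zreal (ray r')) ->
        (cox_exponent ray (A ord0) c0 b r' <= (r' == r))%N.
Proof.
move=> [nfc mc [j0 ej0]] [cf refi [t tS tE]] c0nz s sS.
set A0 := A ord0 in ej0 c0nz *.
have runit := ray_unit cf (ex_intro2 _ _ t tS tE).
have [w wC] := refi ord0 s sS; rewrite -/A0 in wC.
have An : (A0 : seq _) != [::].
  by apply/eqP => h; have : unitN j0 \in (A0 : seq _) by []; rewrite h.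
have [al alA almin] := argmin_seq (fun a => dotNR a w) An.
have alF : faceA A0 w al by split.
have minZ_le0 : forall j r, ray r = unitZ j -> minZ (Ls ray A0 c0 r) <= 0.
  move=> j r rj; have [b bA bj] := coord_zero (mc ord0) j.
  have := minZ_le (memLs ray r c0nz bA); rewrite rj dotNZ_unitZ bj //.
case: (boolP [exists j, al j != 0%N]) => [/existsP [j aj]|].
  have [r rj] := runit j; exists j, r; split => //; exists al => //; split.
    have := Eint ray r c0nz alA; have := minZ_le0 j r rj; rewrite rj dotNZ_unitZ.
    move: aj; move: (cox_exponent _ _ _ _ _) (al j) (minZ _) => x y z. lia.
  move=> r' /wC /(_ al alF) fa.
  have := Eint ray r' c0nz alA; rewrite (minZ_eq c0nz alA (face_int fa)) subrr.
  move: (cox_exponent ray A0 c0 al r') (r' == r) => x [|] /=; lia.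
rewrite negb_exists => /forallP al0.
have al0E : al = [ffun _ => 0%N] by apply/ffunP => i; rewrite ffunE; apply/eqP; rewrite -[_ == _]negbK al0.
rewrite al0E in alF.
have [r rj] := runit j0; exists j0, r; split => //; exists (unitN j0) => //; split.
  have := Eint ray r c0nz ej0; have := minZ_le0 j0 r rj; rewrite rj dotNZ_unitZ ffunE eqxx /=.
  lia.
move=> r' /wC /(_ _ alF) fa.
have zA : [ffun _ => 0%N] \in A0 by case: fa.
have := Eint ray r' c0nz ej0; rewrite (minZ_eq c0nz zA (face_int fa)) dotNZ0 subr0 dotNZ_unitN.
have ro := zero_face (nfc ord0) (mc ord0) fa.
case: (ltrP 0 (ray r' j0)) => h.
  have := orthant_ray cf tS tE ro h; rewrite -rj => /(proj1 (proj2 cf)) ->.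
  rewrite eqxx rj ffunE eqxx /=; lia.
move=> E; move: h; rewrite -E; lia.
Qed.
Definition c1 n : expo n -> CC := fun _ => 1.
Definition Ex n k (ray : 'I_k -> zvec n) (A0 : {fset expo n}) (a : expo n) : 'X_{1..k} :=
  cox_exponent ray A0 (@c1 n) a.
Definition Nz n k (ray : 'I_k -> zvec n) (A0 : {fset expo n}) (Z : {set 'I_k}) (r : 'I_k)
  (a : expo n) : nat :=
  Ex ray A0 a r * [forall r' in Z, (Ex ray A0 a r' <= (r' == r))%N].
Definition idx n m (A : 'I_m.+1 -> {fset expo n}) (b : A ord0) : 'I_#|coefT A| :=
  enum_rank (existT _ ord0 b : coefT A).
Definition Xb n m (A : 'I_m.+1 -> {fset expo n}) (b : A ord0) : {mpoly CC[#|coefT A|]} :=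
  'X_(idx b).
Definition Lp n m k (ray : 'I_k -> zvec n) (A : 'I_m.+1 -> {fset expo n}) Z r
  : {mpoly CC[#|coefT A|]} :=
  if (0 < \sum_(b : A ord0) Nz ray (A ord0) Z r (val b))%N
  then \sum_(b : A ord0) (Nz ray (A ord0) Z r (val b))%:R *: Xb b else 1.
Definition Gp n m k (ray : 'I_k -> zvec n) (A : 'I_m.+1 -> {fset expo n})
  : {mpoly CC[#|coefT A|]} :=
  (\prod_(b : A ord0) Xb b) * \prod_(Z : {set 'I_k}) \prod_(r : 'I_k) Lp ray A Z r.

Lemma ev_Xb n m (A : 'I_m.+1 -> {fset expo n}) (x : coefT A -> CC) (b : A ord0) :
  (Xb b).@[fun r => x (enum_val r)] = x (existT _ ord0 b : coefT A).
Proof. by rewrite /Xb mevalXU /idx enum_rankK. Qed.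

Lemma ev_Lp n m k (ray : 'I_k -> zvec n) (A : 'I_m.+1 -> {fset expo n}) (x : coefT A -> CC) Z r :
  (0 < \sum_(b : A ord0) Nz ray (A ord0) Z r (val b))%N ->
  (Lp ray A Z r).@[fun r => x (enum_val r)] =
  \sum_(b : A ord0) (Nz ray (A ord0) Z r (val b))%:R * x (existT _ ord0 b : coefT A).
Proof.
rewrite /Lp => ->; rewrite raddf_sum; apply: eq_bigr => b _.
by rewrite /= mevalZ ev_Xb.
Qed.

Lemma cox_eq n k (ray : 'I_k -> zvec n) (A0 : {fset expo n}) (c0 : expo n -> CC) :
  (forall a, a \in A0 -> c0 a != 0) -> cox_exponent ray A0 c0 =1 Ex ray A0.
Proof.
move=> c0nz a; rewrite /Ex /cox_exponent /a_rho; apply/mnmP => r; rewrite !mnmE; congr (absz (_ + - minZ _)); congr map.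
by apply: eq_in_filter => x xA; rewrite c0nz // /c1 oner_neq0.
Qed.
Lemma prod01 k (y : 'I_k -> CC) (mm : 'X_{1..k}) r :
  (forall i, y i = 0 \/ y i = 1) ->
  \prod_(i < k) y i ^+ (mm - U_(r))%MM i =
  ([forall r' in [set i | y i == 0], (mm r' <= (r' == r))%N])%:R.
Proof.
move=> y01; case: (boolP [forall _ in _, _]) => H.
  rewrite big1 // => i _; rewrite mnmBE mnm1E.
  case: (y01 i) => yi; last by rewrite yi expr1n.
  have := forallP H i; rewrite inE yi eqxx /= eq_sym => h.
  by rewrite (_ : (_ - _)%N = 0%N) ?expr0 //; apply/eqP; rewrite subn_eq0.
move: H; rewrite negb_forall; case/existsP => i; rewrite negb_imply inE => /andP [/eqP yi hi].
rewrite (bigD1 i) //= mnmBE mnm1E yi expr0n /=.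
rewrite (_ : (_ - _ == 0)%N = false) ?mul0r //.
by apply/negbTE; rewrite subn_eq0 eq_sym.
Qed.
Theorem mainTheorem16 (n m : nat) (A : 'I_m.+1 -> {fset expo n})
    (k : nat) (ray : 'I_k -> zvec n) (Sigma : seq {set 'I_k}) :
  admissible A ->
  appropriate_fan A ray Sigma ->
  generic_coeffs A (fun c : 'I_m.+1 -> expo n -> CC =>
    forall s, s \in Sigma ->
      exists y : 'I_k -> CC, in_torus_orbit ray s y /\
        exists (j : 'I_n) (r : 'I_k), ray r = unitZ j /\
          (mderiv r (ftilde ray (A ord0) (c ord0))).@[y] != 0).
Proof.
move=> adm app.
exists (fun x => exists2 g, g \in [:: Gp ray A] & g.@[fun r => x (enum_val r)] != 0); split.
- by exists [:: Gp ray A].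
- exists (fun _ => 1); exists (Gp ray A); first by rewrite inE.
  rewrite /Gp mevalM mulf_neq0 //.
    rewrite rmorph_prod; apply/prodf_neq0 => b _; by rewrite /= /Xb mevalXU oner_neq0.
  rewrite rmorph_prod; apply/prodf_neq0 => Z _; rewrite rmorph_prod; apply/prodf_neq0 => r _.
  case: (boolP (0 < \sum_(b : A ord0) Nz ray (A ord0) Z r (val b))%N) => h.
    rewrite /= (@ev_Lp n m k ray A (fun _ => 1) Z r h); under eq_bigr do rewrite mulr1.
    by rewrite -natr_sum pnatr_eq0 -lt0n.
  by rewrite /Lp (negbTE h) rmorph1 oner_neq0.
move=> c [g]; rewrite inE => /eqP -> {g}; rewrite /Gp mevalM mulf_eq0 negb_or => /andP [h1 h2].
have c0nz : forall a, a \in A ord0 -> c ord0 a != 0.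
  move=> a aA; move: h1; rewrite rmorph_prod => /prodf_neq0 /(_ (FSetSub aA) isT).
  by rewrite /= ev_Xb.
have hL : forall Z r, (Lp ray A Z r).@[fun r => coords c (enum_val r)] != 0.
  move=> Z r; move: h2; rewrite rmorph_prod => /prodf_neq0 /(_ Z isT).
  by rewrite rmorph_prod => /prodf_neq0 /(_ r isT).
move=> s sS.
have [j [r [rj [b bA [Eb Eall]]]]] := core adm app (c0 := @c1 n) (fun _ _ => oner_neq0 _) sS.
pose y := fun r' => if excluded_middle_informative (cone ray s (zreal (ray r'))) then (0 : CC) else 1.
have y01 : forall i, y i = 0 \/ y i = 1.
  by move=> i; rewrite /y; case: excluded_middle_informative; [left|right].
have yorb : in_torus_orbit ray s y.
  move=> r'; rewrite /y; case: excluded_middle_informative => h; split => //.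
  by move/eqP; rewrite oner_eq0.
exists y; split => //; exists j, r; split => //.
set Z := [set i | y i == 0].
have pos : (0 < \sum_(b0 : A ord0) Nz ray (A ord0) Z r (val b0))%N.
  rewrite (bigD1 (FSetSub bA)) //= ltn_addr // /Nz muln_gt0 Eb /=.
  rewrite lt0b; apply/forallP => r'; apply/implyP; rewrite inE => /eqP /yorb; exact: Eall.
have := hL Z r; rewrite ev_Lp //.
rewrite /ftilde big_seq_fsetE /=.
suff -> : ((\sum_(x : A ord0) c ord0 (fsval x) *: 'X_[(cox_exponent ray (A ord0) (c ord0) (fsval x))])^`M(r)).@[y]
  = \sum_(b0 : A ord0) (Nz ray (A ord0) Z r (fsval b0))%:R * coords c (existT (fun i : 'I_m.+1 => A i) ord0 b0) by [].
rewrite (big_morph (mderiv r) (mderivD r) (mderiv0 _ r)) (big_morph (meval y) (mevalD y) (meval0 y)); apply: eq_bigr => b0 _.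
rewrite mderivZ mderivX mevalZ mevalZ mevalX (cox_eq ray c0nz) (prod01 _ _ y01) -/Z.
by rewrite /Nz natrM /coords /= mulrC.
Qed.
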